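(* Let $d\ge 1$ be an integer and let $G$ be a triangle-free graph on $n$ vertices with maximum degree $d$. Then for every $\lambda>0$, \[ \frac{1}{n}\overline{\alpha}_G(\lambda) \;\ge\; \frac{\lambda}{1+\lambda}\cdot\frac{W(d\log(1+\lambda))}{d\log(1+\lambda)}. \]
   Context: For a graph $G$ with set of independent sets $\mathcal I(G)$ and a fugacity $\lambda>0$, the hard-core model is the probability distribution on $\mathcal I(G)$ given by $\Pr[I]=\lambda^{|I|}/P_G(\lambda)$, where $P_G(\lambda)=\sum_{J\in\mathcal I(G)}\lambda^{|J|}$ is the partition function (independence polynomial). $\overline{\alpha}_G(\lambda)=\sum_{I\in\mathcal I(G)}|I|\Pr[I]=\lambda P_G'(\lambda)/P_G(\lambda)$ is the expected size of the random independent set, and $\frac1n\overline\alpha_G(\lambda)$ is the occupancy fraction. For $z>0$, $W(z)$ (the Lambert $W$ function) denotes the unique positive real with $W(z)e^{W(z)}=z$. Logarithms are natural. *)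

(* Defs.v *)
From mathcomp Require Import all_boot.
From Stdlib Require Import Reals.
Set Implicit Arguments.
Unset Strict Implicit.
Unset Printing Implicit Defensive.

Definition simple_graph (n : nat) (e : rel 'I_n) : Prop :=
  (forall x, ~~ e x x) /\ (forall x y, e x y = e y x).

Definition degree (n : nat) (e : rel 'I_n) (x : 'I_n) : nat :=
  #|[set y | e x y]|.

Definition max_degree (n : nat) (e : rel 'I_n) (d : nat) : Prop :=
  (forall x, degree e x <= d) /\ (exists x, degree e x = d).

Definition triangle_free (n : nat) (e : rel 'I_n) : Prop :=
  forall x y z, ~ [&& e x y, e y z & e x z].

Definition independent (n : nat) (e : rel 'I_n) (I : {set 'I_n}) : bool :=
  [forall x in I, forall y in I, ~~ e x y].

Definition partition_fn (n : nat) (e : rel 'I_n) (lam : R) : R :=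
  \big[Rplus/0%R]_(I : {set 'I_n} | independent e I) (lam ^ #|I|)%R.

Definition hc_prob (n : nat) (e : rel 'I_n) (lam : R) (I : {set 'I_n}) : R :=
  (lam ^ #|I| / partition_fn e lam)%R.

Definition exp_size (n : nat) (e : rel 'I_n) (lam : R) : R :=
  \big[Rplus/0%R]_(I : {set 'I_n} | independent e I)
     (INR #|I| * hc_prob e lam I)%R.

(* Main.v *)
From HB Require Import structures.
Require Import Defs.
From mathcomp Require Import all_boot.
From Stdlib Require Import Reals Lra.

HB.instance Definition _ := Monoid.isComLaw.Build R 0%R Rplus
  (fun x y z => esym (Rplus_assoc x y z)) Rplus_comm Rplus_0_l.
HB.instance Definition _ := Monoid.isComLaw.Build R 1%R Rmult
  (fun x y z => esym (Rmult_assoc x y z)) Rmult_comm Rmult_1_l.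
HB.instance Definition _ := Monoid.isMulLaw.Build R 0%R Rmult Rmult_0_l Rmult_0_r.
HB.instance Definition _ := Monoid.isAddLaw.Build R Rmult Rplus Rmult_plus_distr_r Rmult_plus_distr_l.

Section Gen.
Local Open Scope R_scope.
Variable T : finType.

Lemma sum_le (P : pred T) (F G : T -> R) : (forall i, P i -> F i <= G i) ->
  \big[Rplus/0]_(i | P i) F i <= \big[Rplus/0]_(i | P i) G i.
Proof.
move=> H; apply: (big_ind2 (fun x y => x <= y)) => //; first lra.
by move=> *; apply: Rplus_le_compat.
Qed.

Lemma sum_ge0 (P : pred T) (F : T -> R) : (forall i, P i -> 0 <= F i) ->
  0 <= \big[Rplus/0]_(i | P i) F i.
Proof.
move=> H; apply: (big_ind (fun x => 0 <= x)) => //; first lra.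
by move=> *; lra.
Qed.

Lemma prod_const (A : pred T) (a : R) : \big[Rmult/1]_(i in A) a = a ^ #|A|.
Proof. rewrite big_const; elim: #|A| => //= k ->; done. Qed.

Lemma card_sum (A : pred T) : INR #|A| = \big[Rplus/0]_(i in A) 1.
Proof. rewrite big_const; elim: #|A| => [|k IH]; first by []. rewrite S_INR IH /=; lra. Qed.

Lemma subset_pow (S : {set T}) (a : R) :
  \big[Rplus/0]_(A : {set T} | A \subset S) a ^ #|A| = (1 + a) ^ #|S|.
Proof.
have := @bigA_distr R 0 1 Rmult Rplus T (fun i => if i \in S then a else 0) (fun _ => 1).
have -> : \big[Rmult/1]_i ((if i \in S then a else 0) + 1) = (1 + a) ^ #|S|.
  rewrite -prod_const [RHS]big_mkcond; apply: eq_bigr => i _.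
  by case: (i \in S); lra.
move=> ->; rewrite big_mkcond; apply: eq_big => // J _; symmetry.
case sub: (J \subset S).
  rewrite -prod_const [RHS]big_mkcond; apply: eq_bigr => i _.
  by case iJ: (i \in J); rewrite // (subsetP sub _ iJ).
move/negbT/subsetPn: sub => [i iJ iS].
by rewrite (bigD1 i) //= iJ (negbTE iS) Rmult_0_l.
Qed.
Lemma card_sumS (A : {set T}) : INR #|A| = \big[Rplus/0]_(i in A) 1.
Proof. rewrite big_const; elim: #|A| => [|k IH]; first by []. rewrite S_INR IH /=; lra. Qed.
End Gen.

Lemma iter_plus k c : iter k (Rplus c) 0%R = (INR k * c)%R.
Proof. elim: k => [|k IH]; first by rewrite /=; lra. rewrite S_INR /= IH; lra. Qed.


Section RealPart.
Local Open Scope R_scope.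
Lemma final_real (c L D X w : R) : 0 < c -> 0 < L -> 0 < D -> 0 < w ->
  w * exp w = D * L -> c * exp (- (L * (D * X / c))) <= X -> c * (w / (D * L)) <= X.
Proof.
move=> hc hL hD hw hW hX.
have hDL : 0 < D * L by apply: Rmult_lt_0_compat.
have hX0 : 0 < X by have := exp_pos (- (L * (D * X / c))); nra.
set t := L * (D * X / c).
have ht : 0 < t.
  rewrite /t; apply: Rmult_lt_0_compat => //; apply: Rdiv_lt_0_compat => //; nra.
have Xe : X = t * c / (D * L) by rewrite /t; field; lra.
have key : D * L <= t * exp t.
  have e1 : exp (- t) * exp t = 1 by rewrite -exp_plus Rplus_opp_l exp_0.
  have : c * exp (- t) * (D * L / c) <= X * (D * L / c).
    apply: Rmult_le_compat_r => //; apply: Rlt_le; apply: Rdiv_lt_0_compat => //.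
  have -> : X * (D * L / c) = t by rewrite Xe; field; lra.
  move=> h.
  have h2 : D * L * exp (-t) <= t.
    have -> : D * L * exp (-t) = c * exp (- t) * (D * L / c) by field; lra.
    done.
  have := exp_pos t; nra.
apply: Rnot_lt_le => hlt.
have htw : t < w.
  rewrite Xe in hlt.
  have : t * c / (D * L) * (D * L / c) < c * (w / (D * L)) * (D * L / c).
    apply: Rmult_lt_compat_r => //; apply: Rdiv_lt_0_compat => //.
  have -> : t * c / (D * L) * (D * L / c) = t by field; lra.
  have -> : c * (w / (D * L)) * (D * L / c) = w by field; lra.
  done.
have := exp_increasing _ _ htw; have := exp_pos t; nra.
Qed.
End RealPart.

Section Main.
Local Open Scope R_scope.
Variables (n : nat) (e : rel 'I_n) (lam : R).
Hypothesis Hs : simple_graph e.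
Hypothesis Ht : triangle_free e.

Definition fr (v : 'I_n) (I : {set 'I_n}) := [forall u in I, ~~ e v u].
Definition Nb (v : 'I_n) := [set u | e v u].
Definition Ys (v : 'I_n) (I : {set 'I_n}) := [set u | e v u && fr u I].

Lemma e_irr x : e x x = false.
Proof. by apply/negbTE; case: Hs. Qed.
Lemma e_sym x y : e x y = e y x.
Proof. by case: Hs. Qed.

Lemma indepP (I : {set 'I_n}) : reflect (forall x y, x \in I -> y \in I -> ~~ e x y) (independent e I).
Proof.
rewrite /independent; apply: (iffP forall_inP) => [H x y xI yI | H x xI].
  exact: (forall_inP (H x xI)).
by apply/forall_inP => y yI; apply: H.
Qed.

Lemma frP v (I : {set 'I_n}) : reflect (forall u, u \in I -> ~~ e v u) (fr v I).
Proof. exact: forall_inP. Qed.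

Lemma F2 v :
  \big[Rplus/0]_(I | independent e I && (v \in I)) lam ^ #|I| =
  lam * \big[Rplus/0]_(J | independent e J && fr v J && (v \notin J)) lam ^ #|J|.
Proof.
rewrite (reindex_onto (fun J => v |: J) (fun I => I :\ v)) /=; last first.
  by move=> I /andP[_ vI]; rewrite setD1K.
rewrite big_distrr /=; apply: eq_big => J.
  rewrite setU11 andbT.
  case vJ: (v \in J) => /=.
    rewrite !andbF; apply/negbTE/negP => /andP[_ /eqP H].
    by have := setD11 v (v |: J); rewrite H vJ.
  rewrite setU1K ?vJ // eqxx !andbT.
  apply/idP/idP.
    move/indepP => H; apply/andP; split.
      by apply/indepP => x y xJ yJ; apply: H; rewrite !inE ?xJ ?yJ orbT.
    by apply/frP => u uJ; apply: H; rewrite !inE ?eqxx ?uJ ?orbT.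
  case/andP => /indepP H /frP F.
  apply/indepP => x y; rewrite !inE => /orP[/eqP-> | xJ] /orP[/eqP-> | yJ].
  - by rewrite e_irr.
  - exact: F.
  - by rewrite e_sym; apply: F.
  - exact: H.
move=> /andP[_ /eqP H].
have vJ : v \notin J by rewrite -H setD11.
by rewrite cardsU1 vJ add1n.
Qed.

Lemma fiber_cond v (I A : {set 'I_n}) : independent e I -> fr v I ->
  independent e (I :|: A) && ((I :|: A) :\: Nb v == I) && ((I :|: A) :&: Nb v == A)
  = (A \subset Ys v I).
Proof.
move=> HI HF; apply/idP/idP.
  case/andP => /andP[/indepP H _] /eqP E.
  apply/subsetP => u uA.
  have : u \in (I :|: A) :&: Nb v by rewrite E.
  rewrite !inE => /andP[_ evu]; rewrite evu /=.
  by apply/frP => x xI; apply: H; rewrite inE ?uA ?xI ?orbT.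
move/subsetP => S.
have SA u : u \in A -> e v u && fr u I by move/S; rewrite inE.
have FI x : x \in I -> ~~ e v x by move/frP: HF; apply.
have FA x : x \in A -> e v x by move/SA/andP => [].
apply/andP; split; first (apply/andP; split).
- apply/indepP => x y; rewrite !inE => /orP[xI|xA] /orP[yI|yA].
  + by move/indepP: HI; apply.
  + by have /andP[_ /frP F] := SA y yA; rewrite e_sym; apply: F.
  + by have /andP[_ /frP F] := SA x xA; apply: F.
  + have /andP[ex _] := SA x xA; have /andP[ey _] := SA y yA.
    by apply/negP => exy; apply: (Ht v x y); rewrite ex exy ey.
- apply/eqP/setP => x; rewrite !inE.
  case xI: (x \in I); case xA: (x \in A); case evx: (e v x) => //=;
  first [ by move: (FI x xI); rewrite evx | by move: (FA x xA); rewrite evx ].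
- apply/eqP/setP => x; rewrite !inE.
  case xI: (x \in I); case xA: (x \in A); case evx: (e v x) => //=;
  first [ by move: (FI x xI); rewrite evx | by move: (FA x xA); rewrite evx ].
Qed.

Lemma fiber_inner v (I : {set 'I_n}) : independent e I -> fr v I ->
  \big[Rplus/0]_(J | independent e J && (J :\: Nb v == I)) lam ^ #|J|
  = lam ^ #|I| * (1 + lam) ^ #|Ys v I|.
Proof.
move=> HI HF.
rewrite (reindex_onto (fun A => I :|: A) (fun J => J :&: Nb v)) /=; last first.
  by move=> J /andP[_ /eqP <-]; rewrite setUC setID.
rewrite -subset_pow big_distrr /=.
apply: eq_big => A; first exact: fiber_cond.
move=> /andP[/andP[_ /eqP E1] /eqP E2].
have dis : I :&: A = set0.
  apply/setP => x; rewrite !inE; apply/negP => /andP[xI xA].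
  have : x \in (I :|: A) :&: Nb v by rewrite E2.
  rewrite !inE => /andP[_ evx].
  by move/frP: HF => /(_ x xI); rewrite evx.
rewrite cardsU dis cards0 subn0.
by rewrite pow_add.
Qed.

Lemma fiber v (g : {set 'I_n} -> R) :
  \big[Rplus/0]_(J | independent e J) (lam ^ #|J| * g (J :\: Nb v)) =
  \big[Rplus/0]_(I | independent e I && fr v I) (lam ^ #|I| * (1 + lam) ^ #|Ys v I| * g I).
Proof.
rewrite (partition_big (fun J => J :\: Nb v) (fun I => independent e I && fr v I)) /=; last first.
  move=> J /indepP HJ; apply/andP; split.
    by apply/indepP => x y; rewrite !inE => /andP[_ xJ] /andP[_ yJ]; apply: HJ.
  by apply/frP => u; rewrite !inE => /andP[].
apply: eq_bigr => I /andP[HI HF].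
transitivity (g I * \big[Rplus/0]_(J | independent e J && (J :\: Nb v == I)) lam ^ #|J|).
  rewrite big_distrr /=; apply: eq_bigr => J /andP[_ /eqP ->].
  by rewrite Rmult_comm.
by rewrite fiber_inner // Rmult_comm.
Qed.

Lemma Ys_inv v J : Ys v (J :\: Nb v) = Ys v J.
Proof.
apply/setP => u; rewrite !inE; case evu: (e v u) => //=.
apply/idP/idP.
  move/frP => F; apply/frP => x xJ; case evx: (e v x).
    by apply/negP => eux; apply: (Ht v u x); rewrite evu eux evx.
  by apply: F; rewrite !inE evx xJ.
by move/frP => F; apply/frP => x; rewrite !inE => /andP[_ xJ]; apply: F.
Qed.

Lemma sum_constv (c : R) : \big[Rplus/0]_(i : 'I_n) c = INR n * c.
Proof. by rewrite big_const_ord iter_plus. Qed.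

Lemma F4 (d : nat) (Hd : forall x, leq (degree e x) d) (I : {set 'I_n}) :
  \big[Rplus/0]_v INR #|Ys v I| <= INR d * \big[Rplus/0]_u (if fr u I then 1 else 0).
Proof.
have -> : \big[Rplus/0]_v INR #|Ys v I| =
          \big[Rplus/0]_v \big[Rplus/0]_u (if e v u && fr u I then 1 else 0).
  apply: eq_bigr => v _; rewrite card_sumS big_mkcond; apply: eq_bigr => u _.
  by rewrite inE.
rewrite exchange_big big_distrr; apply: sum_le => u _ /=.
case: (fr u I).
  have -> : \big[Rplus/0]_v (if e v u && true then 1 else 0) = INR (degree e u).
    rewrite /degree card_sumS [RHS]big_mkcond; apply: eq_bigr => v _.
    by rewrite inE andbT e_sym.
  rewrite Rmult_1_r; apply: le_INR; apply/leP; exact: Hd.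
rewrite big1 => [|v _]; last by rewrite andbF.
lra.
Qed.

Hypothesis Hl : 0 < lam.

Definition Av v := \big[Rplus/0]_(I | independent e I && (v \in I)) lam ^ #|I|.
Definition Bv v := \big[Rplus/0]_(I | independent e I && fr v I) lam ^ #|I|.
Definition Cv v := \big[Rplus/0]_(I | independent e I && fr v I && (v \notin I)) lam ^ #|I|.
Definition Tv v := \big[Rplus/0]_(J | independent e J) (lam ^ #|J| * INR #|Ys v J|).

Lemma Z_pos : 0 < partition_fn e lam.
Proof.
rewrite /partition_fn (bigD1 set0) /=; last by apply/indepP => x y; rewrite inE.
rewrite cards0 /=.
have := sum_ge0 _ (fun I : {set 'I_n} => independent e I && (I != set0))
          (fun I => lam ^ #|I|) (fun I _ => pow_le _ _ (Rlt_le _ _ Hl)).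
by move=> h; apply: Rplus_lt_le_0_compat => //; lra.
Qed.

Lemma S1_eq : exp_size e lam * partition_fn e lam = \big[Rplus/0]_v Av v.
Proof.
have Zp := Z_pos.
rewrite /exp_size.
have -> : \big[Rplus/0]_(I | independent e I) (INR #|I| * hc_prob e lam I) =
   (\big[Rplus/0]_(I | independent e I) (INR #|I| * lam ^ #|I|)) * / partition_fn e lam.
  rewrite big_distrl; apply: eq_bigr => I _; rewrite /hc_prob /Rdiv; rewrite /=; ring.
rewrite Rmult_assoc Rinv_l; last lra.
rewrite Rmult_1_r.
transitivity (\big[Rplus/0]_(I | independent e I) \big[Rplus/0]_v (if v \in I then lam ^ #|I| else 0)).
  apply: eq_bigr => I _; rewrite card_sumS big_distrl big_mkcond; apply: eq_bigr => v _.
  by case: (v \in I); rewrite /=; ring.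
by rewrite exchange_big; apply: eq_bigr => v _; rewrite /Av big_mkcondr.
Qed.

Lemma B_eq v : Bv v = Av v + Cv v.
Proof.
have -> : Cv v = \big[Rplus/0]_(I | independent e I && (fr v I && (v \notin I))) lam ^ #|I|.
  by apply: eq_bigl => I; rewrite andbA.
rewrite /Bv /Av !big_mkcondr -big_split; apply: eq_bigr => I HI.
case vI: (v \in I) => /=.
  have -> : fr v I by apply/frP => u uI; move/indepP: HI; apply.
  rewrite /=; ring.
case: (fr v I); rewrite /=; ring.
Qed.

Lemma B_A v : Bv v = Av v * ((1 + lam) / lam).
Proof.
rewrite B_eq; have := F2 v; rewrite -/(Av v) -/(Cv v) => ->.
field; lra.
Qed.

Lemma Zfib v : partition_fn e lam =
  \big[Rplus/0]_(I | independent e I && fr v I) (lam ^ #|I| * (1 + lam) ^ #|Ys v I| * 1).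
Proof.
transitivity (\big[Rplus/0]_(J | independent e J) (lam ^ #|J| * 1)).
  by rewrite /partition_fn; apply: eq_bigr => J _; ring.
exact: (fiber v (fun _ => 1)).
Qed.

Lemma T_eq v : Tv v =
  \big[Rplus/0]_(I | independent e I && fr v I) (lam ^ #|I| * (1 + lam) ^ #|Ys v I| * INR #|Ys v I|).
Proof.
transitivity (\big[Rplus/0]_(J | independent e J) (lam ^ #|J| * INR #|Ys v (J :\: Nb v)|)).
  by rewrite /Tv; apply: eq_bigr => J _; rewrite Ys_inv.
exact: (fiber v (fun I => INR #|Ys v I|)).
Qed.

Lemma tangent q m k : 1 < q -> exp (- (ln q * m)) * (1 - ln q * (INR k - m)) <= / q ^ k.
Proof.
move=> hq; have q0 : 0 < q by lra.
have -> : q ^ k = exp (INR k * ln q) by rewrite -Rpower_pow // /Rpower.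
rewrite -exp_Ropp.
have -> : - (INR k * ln q) = - (ln q * m) + - (ln q * (INR k - m)) by ring.
rewrite exp_plus; apply: Rmult_le_compat_l; first by left; apply: exp_pos.
have := exp_ineq1_le (- (ln q * (INR k - m))); lra.
Qed.

Lemma B_lower v m :
  exp (- (ln (1 + lam) * m)) * ((1 + ln (1 + lam) * m) * partition_fn e lam - ln (1 + lam) * Tv v)
  <= Bv v.
Proof.
have eB : Bv v = \big[Rplus/0]_(I | independent e I && fr v I)
    (lam ^ #|I| * (1 + lam) ^ #|Ys v I| * / (1 + lam) ^ #|Ys v I|).
  apply: eq_bigr => I _; field; apply: pow_nonzero; lra.
rewrite eB (Zfib v) T_eq.
set K := exp (- (ln (1 + lam) * m)).
set L := ln (1 + lam).
have h : \big[Rplus/0]_(I | independent e I && fr v I)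
    (lam ^ #|I| * (1 + lam) ^ #|Ys v I| * (K * (1 - L * (INR #|Ys v I| - m))))
  <= \big[Rplus/0]_(I | independent e I && fr v I)
    (lam ^ #|I| * (1 + lam) ^ #|Ys v I| * / (1 + lam) ^ #|Ys v I|).
  apply: sum_le => I _; apply: Rmult_le_compat_l.
    apply: Rmult_le_pos; apply: pow_le; lra.
  by apply: tangent; lra.
apply: Rle_trans h.
set S1 := \big[Rplus/0]_(I | independent e I && fr v I) (lam ^ #|I| * (1 + lam) ^ #|Ys v I| * 1).
set S2 := \big[Rplus/0]_(I | independent e I && fr v I)
    (lam ^ #|I| * (1 + lam) ^ #|Ys v I| * INR #|Ys v I|).
have -> : \big[Rplus/0]_(I | independent e I && fr v I)
    (lam ^ #|I| * (1 + lam) ^ #|Ys v I| * (K * (1 - L * (INR #|Ys v I| - m))))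
    = (K * (1 + L * m)) * S1 + (- (K * L)) * S2.
  rewrite /S1 /S2 !big_distrr -big_split; apply: eq_bigr => I _; rewrite /=; ring.
right; ring.
Qed.

Lemma sumT_le (d : nat) (Hd : forall x, leq (degree e x) d) :
  \big[Rplus/0]_v Tv v <= INR d * \big[Rplus/0]_v Bv v.
Proof.
rewrite /Tv exchange_big.
have -> : \big[Rplus/0]_v Bv v =
    \big[Rplus/0]_(J | independent e J) \big[Rplus/0]_u (if fr u J then lam ^ #|J| else 0).
  rewrite [RHS]exchange_big; apply: eq_bigr => u _; rewrite /Bv big_mkcondr.
  done.
rewrite big_distrr; apply: sum_le => J _ /=.
rewrite -big_distrr /=.
have -> : \big[Rplus/0]_u (if fr u J then lam ^ #|J| else 0) =
    lam ^ #|J| * \big[Rplus/0]_u (if fr u J then 1 else 0).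
  rewrite big_distrr; apply: eq_bigr => u _; case: (fr u J); rewrite /=; ring.
have := F4 d Hd J.
have wp : 0 <= lam ^ #|J| by apply: pow_le; lra.
move=> h.
have -> : INR d * (lam ^ #|J| * \big[Rplus/0]_u (if fr u J then 1 else 0)) =
   lam ^ #|J| * (INR d * \big[Rplus/0]_u (if fr u J then 1 else 0)) by ring.
by apply: Rmult_le_compat_l.
Qed.
End Main.

Theorem theorem1p4 (d n : nat) (e : rel 'I_n) (lam w : R) :
  (1 <= d)%N ->
  simple_graph e -> triangle_free e -> max_degree e d ->
  (0 < lam)%R ->
  (0 < w)%R -> (w * exp w = INR d * ln (1 + lam))%R ->
  (lam / (1 + lam) * (w / (INR d * ln (1 + lam))) <= exp_size e lam / INR n)%R.
Proof.
move=> hd Hs Ht [Hd [x0 _]] Hl hw hW.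
have hn : (0 < n)%N by case: x0 => k hk; apply: leq_ltn_trans hk.
have Nn : (0 < INR n)%R by apply: lt_0_INR; apply/ltP.
have hD : (0 < INR d)%R by apply: lt_0_INR; apply/ltP.
have hL : (0 < ln (1 + lam))%R.
  rewrite -ln_1; apply: ln_increasing; lra.
have Zp := Z_pos n e lam Hl.
set L := ln (1 + lam) in hL hW *.
set Z := partition_fn e lam in Zp.
set SB := \big[Rplus/0%R]_v Bv n e lam v.
set ST := \big[Rplus/0%R]_v Tv n e lam v.
have h1 : SB = (exp_size e lam * Z * ((1 + lam) / lam))%R.
  rewrite /SB /Z (S1_eq n e lam Hl) big_distrl; apply: eq_bigr => v _; exact: B_A.
set m := (ST / (INR n * Z))%R.
set K := exp (- (L * m)).
have h2 : (K * ((1 + L * m) * Z * INR n - L * ST) <= SB)%R.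
  have := sum_le _ (fun _ => true) _ _ (fun v _ => B_lower n e lam Hs Ht Hl v m).
  have -> : \big[Rplus/0%R]_v (exp (- (ln (1 + lam) * m)) *
      ((1 + ln (1 + lam) * m) * partition_fn e lam - ln (1 + lam) * Tv n e lam v))%R
    = ((K * (1 + L * m) * Z) * \big[Rplus/0%R]_(v : 'I_n) 1 + (- (K * L)) * ST)%R.
    transitivity (\big[Rplus/0%R]_v ((K * (1 + L * m) * Z) * 1 + (- (K * L)) * Tv n e lam v))%R.
      by apply: eq_bigr => v _; rewrite /K /L /Z; ring.
    by rewrite big_split /= -!big_distrr.
  rewrite sum_constv => h; apply: Rle_trans h; right; ring.
have h3 := sumT_le n e lam Hs Hl d Hd.
rewrite -/ST -/SB in h3.
set X := (exp_size e lam / INR n)%R.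
set c := (lam / (1 + lam))%R.
have hc : (0 < c)%R by apply: Rdiv_lt_0_compat; lra.
have eSB : SB = (X * INR n * Z / c)%R by rewrite h1 /X /c; field; lra.
have eLST : (L * ST = L * m * (INR n * Z))%R by rewrite /m; field; lra.
have hK : (c * K <= X)%R.
  have : (K * (Z * INR n) <= X * INR n * Z / c)%R.
    rewrite -eSB; apply: Rle_trans h2; right.
    have -> : (L * ST = L * m * (INR n * Z))%R by exact: eLST.
    ring.
  move=> h.
  have hZN : (0 < Z * INR n)%R by apply: Rmult_lt_0_compat.
  have : (c * K * (Z * INR n) <= X * (Z * INR n))%R.
    have -> : (X * (Z * INR n) = c * (X * INR n * Z / c))%R by field; lra.
    rewrite Rmult_assoc; apply: Rmult_le_compat_l; lra.
  move=> h'; apply: (Rmult_le_reg_r (Z * INR n)) => //.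
have hm : (m <= INR d * X / c)%R.
  rewrite /m.
  have hZN : (0 < INR n * Z)%R by apply: Rmult_lt_0_compat.
  have -> : (INR d * X / c = (INR d * SB) / (INR n * Z))%R by rewrite eSB; field; lra.
  apply: Rmult_le_compat_r; last exact: h3.
  by left; apply: Rinv_0_lt_compat.
have hE : (exp (- (L * (INR d * X / c))) <= K)%R.
  rewrite /K.
  have : (- (L * (INR d * X / c)) <= - (L * m))%R.
    apply: Ropp_le_contravar; apply: Rmult_le_compat_l; lra.
  case => [hlt|->]; last by right.
  by left; apply: exp_increasing.
apply: (final_real _ _ _ _ _ hc hL hD hw hW).
apply: Rle_trans hK; apply: Rmult_le_compat_l; lra.
Qed.
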